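(* Let $3\le k\le n-1$ and $1\le h\le n-k$. Let $S$ be a minimum $h$-cut of $S_{n,k}$ (so $|S|=\kappa_s^{(h)}(S_{n,k})$) and let $X$ be the vertex set of a connected component of $S_{n,k}-S$. Fix $t\in\{2,\dots,k\}$, and for $i\in I_n$ let $Y=V(S_{n,k})\setminus(S\cup X)$, $X_i=X\cap V(S^{t:i}_{n-1,k-1})$, $Y_i=Y\cap V(S^{t:i}_{n-1,k-1})$, $S_i=S\cap V(S^{t:i}_{n-1,k-1})$, and $J=\{i\in I_n: X_i\ne\emptyset\}$, $J'=\{i\in J: Y_i\ne\emptyset\}$, $T=\{i\in I_n: Y_i\ne\emptyset\}$. Then: (a) for every $i\in J'$, $S_i$ is an $(h-1)$-cut of $S^{t:i}_{n-1,k-1}$ (viewed as a copy of $S_{n-1,k-1}$); (b) $\kappa_s^{(h)}(S_{n,k})\ge |J'|\,\kappa_s^{(h-1)}(S_{n-1,k-1})$; (c) $J\cup T=I_n$.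
   Context: For integers $1\le k\le n-1$, let $I_n=\{1,\dots,n\}$ and $P(n,k)$ the set of $k$-permutations $p_1p_2\cdots p_k$ of distinct elements of $I_n$. The $(n,k)$-star graph $S_{n,k}$ has vertex set $P(n,k)$; a vertex $p=p_1p_2\cdots p_k$ is adjacent to (a) each vertex obtained by swapping $p_1$ with $p_i$ for $2\le i\le k$, and (b) each vertex $\alpha p_2\cdots p_k$ with $\alpha\in I_n\setminus\{p_1,\dots,p_k\}$. For $2\le t\le k$ and $i\in I_n$, $S^{t:i}_{n-1,k-1}$ is the subgraph of $S_{n,k}$ induced by all vertices whose $t$-th entry equals $i$; it is isomorphic to $S_{n-1,k-1}$, and each of its vertices has exactly one neighbor outside it. For a connected graph $G$ and integer $h\ge 0$, a set $S\subseteq V(G)$ is an $h$-cut if $G-S$ is disconnected and has minimum degree at least $h$; $\kappa_s^{(h)}(G)$ is the minimum cardinality of an $h$-cut of $G$. *)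

(* Defs.v *)
From mathcomp Require Import all_boot.
Set Implicit Arguments. Unset Strict Implicit. Unset Printing Implicit Defensive.

Section Graphs.
Variables (T : finType) (e : rel T).

Definition restr (A : {set T}) : rel T :=
  [rel x y | [&& x \in A, y \in A & e x y]].

Definition disconnected_on (A : {set T}) : bool :=
  [exists x, exists y, [&& x \in A, y \in A & ~~ connect (restr A) x y]].

Definition deg_in (A : {set T}) (x : T) : nat := #|[set y in A | e x y]|.

Definition mindeg_ge (A : {set T}) (h : nat) : bool :=
  [forall x in A, h <= deg_in A x].

Definition hcut (U S : {set T}) (h : nat) : bool :=
  [&& S \subset U, disconnected_on (U :\: S) & mindeg_ge (U :\: S) h].

Definition min_hcut (S : {set T}) (h : nat) : Prop :=
  hcut setT S h /\ forall S', hcut setT S' h -> #|S| <= #|S'|.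

(* kappa_s^(h)(G): minimum cardinality of an h-cut of G
   (junk value 0 if G has no h-cut) *)
Definition kappa_s (h : nat) : nat :=
  match [pick S : {set T} | hcut setT S h ] with
  | Some S0 => #|[arg min_(S < S0 | hcut setT S h) #|S|]|
  | None => 0
  end.

Definition component_of (A X : {set T}) : Prop :=
  exists2 x, x \in A & X = [set y in A | connect (restr A) x y].

End Graphs.

(* Vertices: k-permutations of I_n, encoded as duplicate-free k-tuples over
   'I_n (so I_n = {1..n} is relabelled {0..n-1}; positions 1..k of the paper
   are seq positions 0..k-1). *)
Definition kperm (n k : nat) := {t : k.-tuple 'I_n | uniq t}.

Definition kseq n k (p : kperm n k) : seq nat := map val (val p).

(* q is obtained from p by swapping p_1 with p_i, 2 <= i <= k *)
Definition swap_adj (k : nat) (ps qs : seq nat) : bool :=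
  [exists i : 'I_k, (0 < i) &&
     [forall j : 'I_k, nth 0 qs j ==
         nth 0 ps (if val j == 0 then val i else if j == i then 0 else val j)]].

(* q = alpha p_2 ... p_k with alpha not in {p_1,...,p_k} *)
Definition ext_adj (ps qs : seq nat) : bool :=
  (behead qs == behead ps) && (head 0 qs \notin ps).

Definition star_rel (n k : nat) : rel (kperm n k) :=
  fun p q => swap_adj k (kseq p) (kseq q) || ext_adj (kseq p) (kseq q).

(* vertex set of S^{t:i}_{n-1,k-1}: t-th entry (paper's 1-based t) equals i *)
Definition sub_star (n k t : nat) (i : 'I_n) : {set kperm n k} :=
  [set p | nth 0 (kseq p) t.-1 == val i].

(* Main.v *)
Require Import Defs.
From mathcomp Require Import all_boot all_fingroup zify.
Set Implicit Arguments. Unset Strict Implicit. Unset Printing Implicit Defensive.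

Section Basic.
Variables (n k : nat).
Implicit Types (p q : kperm n k).

Definition ent (x0 : 'I_n) p (j : nat) : 'I_n := nth x0 (val p) j.

Lemma uniq_kp p : uniq (val p). Proof. exact: (valP p). Qed.

Lemma nth_kseq x0 p j : j < k -> nth 0 (kseq p) j = ent x0 p j.
Proof. by move=> jk; rewrite /kseq (nth_map x0) ?size_tuple. Qed.

Lemma kp_eq x0 p q : (forall j, j < k -> ent x0 p j = ent x0 q j) -> p = q.
Proof.
move=> H; apply: val_inj; apply: val_inj.
by apply: (eq_from_nth (x0:=x0)); rewrite ?size_tuple // => j jk; apply: H.
Qed.

Lemma vp_proof (s : {perm 'I_n}) p : uniq (map_tuple s (val p)).
Proof. by rewrite /= map_inj_uniq ?uniq_kp //; exact: perm_inj. Qed.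

Definition vp (s : {perm 'I_n}) p : kperm n k := exist (fun t : k.-tuple 'I_n => uniq t) (map_tuple s (val p)) (vp_proof s p).

Lemma ent_vp x0 s p j : j < k -> ent x0 (vp s p) j = s (ent x0 p j).
Proof. by move=> jk; rewrite /ent /= (nth_map x0) ?size_tuple. Qed.

Lemma ent_inj x0 p i j : i < k -> j < k -> ent x0 p i = ent x0 p j -> i = j.
Proof.
move=> ik jk; rewrite /ent => /eqP; rewrite nth_uniq ?size_tuple ?uniq_kp //.
by move/eqP.
Qed.

Lemma ent_mem x0 p c : c \in (val p : seq _) -> exists2 i, i < k & ent x0 p i = c.
Proof.
move=> cp; exists (index c (val p)); first by move: cp; rewrite -index_mem size_tuple.
by rewrite /ent nth_index.
Qed.

Lemma ent_in x0 p j : j < k -> ent x0 p j \in (val p : seq _).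
Proof. by move=> jk; rewrite /ent mem_nth ?size_tuple. Qed.

Lemma vpM s1 s2 p : vp s1 (vp s2 p) = vp (s2 * s1) p.
Proof.
apply: val_inj; apply: val_inj => /=; rewrite -map_comp; apply: eq_map => x.
by rewrite permM.
Qed.

Lemma vp1 p : vp 1 p = p.
Proof.
apply: val_inj; apply: val_inj => /=; rewrite -[RHS]map_id; apply: eq_map => x.
by rewrite perm1.
Qed.

Lemma head_kseq x0 p : 0 < k -> head 0 (kseq p) = ent x0 p 0.
Proof. by move=> k0; rewrite -(nth_kseq x0 p k0). Qed.

Lemma star_relP x0 p q : 0 < k ->
  reflect (exists2 c, c != ent x0 p 0 & q = vp (tperm (ent x0 p 0) c) p)
          (star_rel p q).
Proof.
move=> k0; apply: (iffP idP).
- rewrite /star_rel; case/orP.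
  + case/existsP => i /andP [i0 /forallP H]; exists (ent x0 p i).
      apply/eqP => /ent_inj; move=> /(_ (ltn_ord i) k0) ei.
      by rewrite ei in i0.
    apply: (kp_eq (x0:=x0)) => j jk; rewrite ent_vp //.
    have := eqP (H (Ordinal jk)); rewrite /= (nth_kseq x0) //.
    have ik := ltn_ord i.
    rewrite (nth_kseq x0); last by case: ifP => //; case: ifP.
    move/val_inj => ->.
    case: (eqVneq j 0) => [->|j0]; first by rewrite tpermL.
    case: (eqVneq (Ordinal jk) i) => [<-|ji]; first by rewrite tpermR.
    rewrite tpermD //.
      by apply/eqP => /ent_inj => /(_ k0 jk) e; rewrite e eqxx in j0.
    apply/eqP => /ent_inj => /(_ ik jk) e.
    by rewrite -(inj_eq val_inj) /= e eqxx in ji.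
  + case/andP => /eqP Hb Hh.
    have sq : size (kseq q) = k by rewrite size_map size_tuple.
    rewrite (head_kseq x0) // in Hh.
    exists (ent x0 q 0).
      apply/eqP => e.
      move: Hh; rewrite e mem_map ?ent_in //.
      exact: val_inj.
    apply: (kp_eq (x0:=x0)) => j jk; rewrite ent_vp //.
    case: (eqVneq j 0) => [->|j0].
      by rewrite tpermL.
    have : nth 0 (behead (kseq q)) j.-1 = nth 0 (behead (kseq p)) j.-1 by rewrite Hb.
    rewrite !nth_behead prednK ?lt0n //.
    rewrite !(nth_kseq x0) // => /val_inj eqj.
    rewrite eqj.
    rewrite tpermD //.
      by apply/eqP => /ent_inj => /(_ k0 jk) e; rewrite e eqxx in j0.
    apply/eqP => /(congr1 val) /= e.
    move: Hh; rewrite e -(nth_kseq x0) //; rewrite mem_nth //.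
    by rewrite size_map size_tuple.
- case=> c cp ->.
  rewrite /star_rel.
  case: (boolP (c \in (val p : seq _))) => cin.
  + apply/orP; left.
    have [i ik ei] := ent_mem x0 cin.
    have i0 : 0 < i.
      rewrite lt0n; apply/eqP => i0; move: cp; by rewrite -ei i0 eqxx.
    apply/existsP; exists (Ordinal ik); rewrite i0 /=.
    apply/forallP => j; apply/eqP.
    rewrite (nth_kseq x0) // ent_vp // (nth_kseq x0); last by case: ifP => //; case: ifP.
    congr val.
    case: (eqVneq (val j) 0) => [->|j0]; first by rewrite tpermL ei.
    case: (eqVneq j (Ordinal ik)) => [->|ji]; first by rewrite /= -ei tpermR.
    rewrite tpermD //.
      by apply/eqP => /ent_inj => /(_ k0 (ltn_ord j)) e; rewrite e eqxx in j0.
    rewrite -ei; apply/eqP => /ent_inj => /(_ ik (ltn_ord j)) e.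
    by rewrite -(inj_eq val_inj) /= e eqxx in ji.
  + apply/orP; right; apply/andP; split.
      apply/eqP; apply: (eq_from_nth (x0:=0)); first by rewrite !size_behead !size_map !size_tuple.
      rewrite size_behead size_map size_tuple => j jk.
      have jk' : j.+1 < k by rewrite -(ltn_predK k0) ltnS.
      rewrite !nth_behead !(nth_kseq x0) // ent_vp //; congr val.
      rewrite tpermD //.
        by apply/eqP => /ent_inj => /(_ k0 jk').
      by apply: contraNneq cin => ->; rewrite ent_in.
    rewrite (head_kseq x0) // ent_vp // tpermL.
    by rewrite mem_map //; exact: val_inj.
Qed.

End Basic.

Lemma connect_hom (T T' : finType) (e : rel T) (e' : rel T') (f : T -> T') x y :
  (forall u v, e u v -> e' (f u) (f v)) -> connect e x y -> connect e' (f x) (f y).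
Proof.
move=> H /connectP [s ps ->]; elim: s x ps => //= z s IH x /andP [exz ps].
apply: connect_trans (IH _ ps); exact: connect1 (H _ _ exz).
Qed.

Lemma connect_inv (T : finType) (e : rel T) (A : {set T}) x y :
  (forall u v, u \in A -> e u v -> v \in A) -> connect e x y -> x \in A -> y \in A.
Proof.
move=> H /connectP [s ps ->]; elim: s x ps => //= z s IH x /andP [exz ps] xA.
exact: IH ps (H _ _ xA exz).
Qed.

Lemma kappa_le (T : finType) (e : rel T) h B : hcut e setT B h -> kappa_s e h <= #|B|.
Proof.
move=> hB; rewrite /kappa_s; case: pickP => [S0 hS0|/(_ B)]; last by rewrite hB.
by case: arg_minnP => // S _ /(_ B hB).
Qed.

Lemma kappa_min (T : finType) (e : rel T) h S : min_hcut e S h -> kappa_s e h = #|S|.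
Proof.
case=> hS mS; apply/eqP; rewrite eqn_leq kappa_le //.
rewrite /kappa_s; case: pickP => [S0 hS0|/(_ S)]; last by rewrite hS.
by case: arg_minnP => // S1 hS1 _; apply: mS.
Qed.

Lemma kperm_ex n k (z : 'I_n) (s : seq nat) :
  size s = k -> all (fun x => x < n) s -> uniq s -> exists p : kperm n k, kseq p = s.
Proof.
move=> ss sa su.
have ts : size (map (insubd z) s) == k by rewrite size_map ss.
have tu : uniq (Tuple ts).
  rewrite /= map_inj_in_uniq // => x y xs ys.
  move/(congr1 val); rewrite !insubdK //; first exact: (allP sa).
  exact: (allP sa).
exists (exist (fun t : k.-tuple 'I_n => uniq t) (Tuple ts) tu).
rewrite /kseq /= -map_comp; apply: map_id_in => x xs /=.
by rewrite insubdK //; exact: (allP sa).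
Qed.

Lemma unbump_lt n (i0 v : 'I_n) : v != i0 -> unbump i0 v < n - 1.
Proof.
rewrite -(inj_eq val_inj) /= => /eqP vi; have := ltn_ord i0; have := ltn_ord v.
rewrite /unbump; case: (ltnP i0 v) => ? /=; lia.
Qed.

Section Iso.
Variables (n k P : nat) (i0 x0 : 'I_n) (y0 : 'I_(n-1)) (p0 : kperm n k).
Hypotheses (P0 : 0 < P) (Pk : P < k).

Definition lft (x : nat) : 'I_n := insubd i0 (bump i0 x).

Lemma lftE x : x < n - 1 -> val (lft x) = bump i0 x.
Proof.
move=> xn; rewrite insubdK // /bump; case: leqP => _ /=; lia.
Qed.

Lemma lft_neq x : x < n - 1 -> lft x != i0.
Proof.
move=> xn; rewrite -(inj_eq val_inj) lftE //; rewrite eq_sym; exact: neq_bump.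
Qed.

Lemma lft_inj x y : x < n - 1 -> y < n - 1 -> lft x = lft y -> x = y.
Proof.
move=> xn yn /(congr1 val); rewrite !lftE // => /(congr1 (unbump i0)).
by rewrite !bumpK.
Qed.

Definition gi (j : nat) := if j < P then j else j.-1.

Lemma gi_lt j : j < k -> j != P -> gi j < k - 1.
Proof. rewrite /gi => jk /eqP jP; case: ifP => H; lia. Qed.

Definition insS (a : kperm (n - 1) (k - 1)) : seq 'I_n :=
  mkseq (fun j => if j == P then i0 else lft (ent y0 a (gi j))) k.

Lemma insS_uniq a : uniq (insS a).
Proof.
apply/mkseq_uniqP => i j; rewrite !inE => ik jk /=.
case: (eqVneq i P) => [->|iP]; case: (eqVneq j P) => [->|jP] //.
- by move=> e; move: (lft_neq (ltn_ord (ent y0 a (gi j)))); rewrite -e eqxx.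
- by move=> e; move: (lft_neq (ltn_ord (ent y0 a (gi i)))); rewrite e eqxx.
move/lft_inj => /(_ (ltn_ord _) (ltn_ord _)) /val_inj.
move/ent_inj => /(_ (gi_lt ik iP) (gi_lt jk jP)).
move: iP jP => /eqP iP /eqP jP; rewrite /gi; case: ifP => ?; case: ifP => ?; lia.
Qed.

Lemma insS_size a : size (insS a) == k.
Proof. by rewrite size_mkseq. Qed.

Definition psi (a : kperm (n - 1) (k - 1)) : kperm n k :=
  insubd p0 (insubd (val p0) (insS a)).

Lemma psi_val a : val (val (psi a)) = insS a.
Proof.
have hs : insubd (val p0) (insS a) = insS a :> seq _.
  rewrite insubdK //; exact: insS_size.
have u : uniq (insubd (val p0) (insS a)) by rewrite hs insS_uniq.
by rewrite /psi insubdK...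
Qed.

Lemma psi_ent a j : j < k ->
  ent x0 (psi a) j = if j == P then i0 else lft (ent y0 a (gi j)).
Proof. by move=> jk; rewrite /ent psi_val nth_mkseq. Qed.

Lemma psi_P a : ent x0 (psi a) P = i0.
Proof. by rewrite psi_ent // eqxx. Qed.

Lemma psi_inj : injective psi.
Proof.
move=> a b e; apply: (kp_eq (x0:=y0)) => j jk.
have j'k : (if j < P then j else j.+1) < k by case: ifP => ?; lia.
have := congr1 (fun p => ent x0 p (if j < P then j else j.+1)) e.
rewrite /= !psi_ent //.
have -> : ((if j < P then j else j.+1) == P) = false by case: ifP => ?; lia.
have -> : gi (if j < P then j else j.+1) = j.
  by rewrite /gi; case: (ltnP j P) => H; [rewrite H /= ?H | case: ltnP => ?; lia].
by move/lft_inj => /(_ (ltn_ord _) (ltn_ord _)) /val_inj.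
Qed.

Lemma psi_surj y : ent x0 y P = i0 -> exists a, psi a = y.
Proof.
move=> yP.
pose s := mkseq (fun j => unbump i0 (val (ent x0 y (if j < P then j else j.+1)))) (k - 1).
have hne : forall j, j < k - 1 -> ent x0 y (if j < P then j else j.+1) != i0.
  move=> j jk; rewrite -yP; apply/eqP => /ent_inj.
  have : (if j < P then j else j.+1) < k by case: ifP => ?; lia.
  by move=> H /(_ H Pk); case: ifP => ?; lia.
have hlt : forall j, j < k - 1 ->
    unbump i0 (val (ent x0 y (if j < P then j else j.+1))) < n - 1.
  by move=> j jk; apply: unbump_lt; apply: hne.
have [a ea] : exists a : kperm (n - 1) (k - 1), kseq a = s.
  apply: (kperm_ex y0); first by rewrite size_mkseq.
    by apply/allP => x /mapP [j]; rewrite mem_iota add0n => /andP [_ jk] ->; apply: hlt.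
  apply/mkseq_uniqP => i j; rewrite !inE => ik jk.
  move/(congr1 (bump i0)); rewrite !unbumpK ?inE ?hne // => /val_inj /ent_inj.
  by move=> /(_ ltac:(case: ifP => ?; lia) ltac:(case: ifP => ?; lia)); case: ifP; case: ifP => *; lia.
exists a; apply: (kp_eq (x0:=x0)) => j jk; rewrite psi_ent //.
case: (eqVneq j P) => [->|jP]; first by [].
apply: val_inj; rewrite lftE // -(nth_kseq y0) ?gi_lt // ea nth_mkseq ?gi_lt //.
have -> : (if gi j < P then gi j else (gi j).+1) = j.
  by move: jP => /eqP jP; rewrite /gi; case: (ltnP j P) => H; [rewrite H /= ?H | case: ltnP => ?; lia].
have hj : ent x0 y j != i0.
  by rewrite -yP; apply/eqP => /(ent_inj jk Pk) e; rewrite e eqxx in jP.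
by rewrite unbumpK // inE.
Qed.

Lemma lft_tperm (u v w : 'I_(n - 1)) :
  lft (tperm u v w) = tperm (lft u) (lft v) (lft w).
Proof.
case: (tpermP u v w) => [->|->|wu wv]; rewrite ?tpermL ?tpermR //.
rewrite tpermD //; apply/eqP => /lft_inj => /(_ (ltn_ord _) (ltn_ord _)) /val_inj.
  by move=> e; apply: wu.
by move=> e; apply: wv.
Qed.

Lemma psi_vp (u v : 'I_(n - 1)) a :
  psi (vp (tperm u v) a) = vp (tperm (lft u) (lft v)) (psi a).
Proof.
apply: (kp_eq (x0:=x0)) => j jk; rewrite ent_vp // !psi_ent //.
case: (eqVneq j P) => [_|jP].
  by rewrite tpermD // lft_neq.
by rewrite ent_vp ?gi_lt // lft_tperm.
Qed.

Lemma psi_0 a : ent x0 (psi a) 0 = lft (ent y0 a 0).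
Proof. by rewrite psi_ent; [rewrite eq_sym (gtn_eqF P0) /gi P0|lia]. Qed.

Hypothesis k3 : 2 < k.

Lemma psi_rel a b : star_rel (psi a) (psi b) = star_rel a b.
Proof.
have k1 : 0 < k - 1 by lia.
have k0 : 0 < k by lia.
apply/(star_relP x0 _ _ k0)/(star_relP y0 _ _ k1).
- case=> c; rewrite psi_0 => cn e.
  have ci : c != i0.
    apply/eqP => ci; have := psi_P b; rewrite e ent_vp // psi_P ci tpermR => /eqP.
    by rewrite (negbTE (lft_neq _)).
  have cl : c \in [set lft j | j : 'I_(n-1)].
    have cu : unbump i0 c < n - 1 by apply: unbump_lt.
    apply/imsetP; exists (Ordinal cu) => //; apply: val_inj.
    by rewrite lftE //= unbumpK // inE.
  case/imsetP: cl => d _ cd.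
  exists d.
    by apply: contraNneq cn => e2; rewrite cd e2.
  by apply: psi_inj; rewrite psi_vp e cd.
- case=> c cn e; exists (lft c).
    apply: contraNneq cn; rewrite psi_0 => /(lft_inj (ltn_ord _) (ltn_ord _)).
    by move/val_inj ->.
  by rewrite e psi_vp psi_0.
Qed.

End Iso.

Section Transfer.
Variables (n k P : nat) (i0 x0 : 'I_n) (y0 : 'I_(n-1)) (p0 : kperm n k).
Hypotheses (P0 : 0 < P) (Pk : P < k) (k3 : 2 < k).

Local Notation psi := (psi P i0 y0 p0).
Let U := [set p : kperm n k | ent x0 p P == i0].

Lemma transfer A h' : hcut (@star_rel n k) U A h' ->
  exists B : {set kperm (n-1) (k-1)},
    hcut (@star_rel (n-1) (k-1)) setT B h' /\ #|B| <= #|A|.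
Proof.
case/and3P => AU /existsP [x /existsP [y /and3P [xU yU nc]]] /forallP md.
exists [set z | psi z \in A]; split; last first.
  have <- := card_imset [set z | psi z \in A] (@psi_inj n k P i0 x0 y0 p0 P0 Pk); apply: subset_leq_card.
  apply/subsetP => w /imsetP [z]; rewrite inE => zA ->; exact: zA.
have psiU z : psi z \in U by rewrite inE (psi_P i0 x0 y0 p0 P0 Pk).
have surj u : u \in U -> exists z, psi z = u.
  by rewrite inE => /eqP; apply: (psi_surj y0 p0 P0 Pk).
have hom : forall u v, restr (@star_rel (n-1) (k-1)) (setT :\: [set z | psi z \in A]) u v ->
    restr (@star_rel n k) (U :\: A) (psi u) (psi v).
  move=> u v /and3P [uB vB uv]; apply/and3P; split.
  - by rewrite in_setD psiU andbT; move: uB; rewrite !inE andbT.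
  - by rewrite in_setD psiU andbT; move: vB; rewrite !inE andbT.
  by rewrite (psi_rel i0 x0 y0 p0 P0 Pk k3).
apply/and3P; split; first exact: subsetT.
- case/setDP: xU => xU xA; case/setDP: yU => yU yA.
  have [a ea] := surj x xU; have [b eb] := surj y yU.
  apply/existsP; exists a; apply/existsP; exists b.
  rewrite !inE ea eb xA yA /=.
  apply: contra nc => c; rewrite -ea -eb; exact: connect_hom hom c.
apply/forallP => z; apply/implyP => zB.
have pz : psi z \in U :\: A.
  by rewrite in_setD psiU andbT; move: zB; rewrite !inE andbT.
have := md (psi z); rewrite pz /= => /leq_trans; apply.
rewrite /deg_in; apply: leq_trans (leq_imset_card psi _).
apply: subset_leq_card; apply/subsetP => u; rewrite inE => /andP [uUA e].
case/setDP: (uUA) => uU uA; have [w ew] := surj u uU.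
apply/imsetP; exists w => //.
rewrite !inE ew uA /=.
by rewrite -(psi_rel i0 x0 y0 p0 P0 Pk k3) ew.
Qed.

End Transfer.

Section Main.
Variables (n k h P : nat) (S X : {set kperm n k}) (x0 : 'I_n) (x1 : kperm n k).
Hypotheses (k3 : 2 < k) (kn : k <= n - 1) (hn : h <= n - k) (P0 : 0 < P) (Pk : P < k)
  (hS : hcut (@star_rel n k) setT S h)
  (mS : forall S', hcut (@star_rel n k) setT S' h -> #|S| <= #|S'|)
  (x1S : x1 \in ~: S)
  (Xdef : X = [set y in ~: S | connect (restr (@star_rel n k) (~: S)) x1 y]).

Local Notation e := (@star_rel n k).
Definition subs (i : 'I_n) := [set p : kperm n k | ent x0 p P == i].

Lemma k0 : 0 < k. Proof. lia. Qed.

Lemma outside x y i : x \in subs i -> e x y -> y \notin subs i ->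
  y = vp (tperm (ent x0 x 0) i) x.
Proof.
rewrite !inE => /eqP xi /(star_relP x0 _ _ k0) [c cn ->].
case: (eqVneq c i) => [-> //|ci].
rewrite ent_vp // xi tpermD ?eqxx //.
by rewrite -xi; apply/eqP => /(ent_inj k0 Pk) P0'; move: P0; rewrite -P0'.
Qed.

Lemma XnS : X \subset ~: S.
Proof. by rewrite Xdef; apply/subsetP => y; rewrite inE => /andP []. Qed.

Lemma memD (A B : {set kperm n k}) x : (x \in B :\: (A :&: B)) = (x \notin A) && (x \in B).
Proof. by rewrite in_setD in_setI; case: (x \in B); rewrite ?andbT ?andbF. Qed.

Lemma part_a i : X :&: subs i != set0 -> ~: (S :|: X) :&: subs i != set0 ->
  hcut e (subs i) (S :&: subs i) (h - 1).
Proof.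
move=> /set0Pn [x]; rewrite in_setI => /andP [xX xi].
move=> /set0Pn [y]; rewrite in_setI in_setC in_setU negb_or => /andP [/andP [yS yX] yi].
have xS : x \notin S by have := subsetP XnS x xX; rewrite inE.
apply/and3P; split; first exact: subsetIr.
- apply/existsP; exists x; apply/existsP; exists y.
  rewrite !memD xS yS xi yi /=.
  apply/negP => c.
  have c' : connect (restr e (~: S)) x y.
    apply: (connect_hom (f := id)) c => u v /and3P [uB vB uv].
    apply/and3P; split => //; rewrite in_setC; [move: uB | move: vB];
      by rewrite memD => /andP [].
  move: yX; rewrite Xdef inE in_setC yS /=.
  move: xX; rewrite Xdef inE => /andP [_ c1].
  by rewrite (connect_trans c1 c').
apply/forallP => v; apply/implyP; rewrite memD => /andP [vS vi].
have [_ _ /forallP md] := and3P hS.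
have := md v; rewrite in_setD in_setT andbT vS /= => hv.
rewrite leq_subLR; apply: leq_trans hv _; rewrite /deg_in.
apply: leq_trans (_ : #|[set y in subs i :\: (S :&: subs i) | e v y] :|:
                      [set vp (tperm (ent x0 v 0) i) v]| <= _); last first.
  by rewrite cardsU cards1 addnC; apply: leq_subr.
apply: subset_leq_card; apply/subsetP => z; rewrite inE in_setD in_setT andbT => /andP [zS vz].
rewrite in_setU; case: (boolP (z \in subs i)) => zi.
  by rewrite inE memD zS zi vz.
by rewrite (outside vi vz zi) in_set1 eqxx orbT.
Qed.

Lemma card_S : #|S| = \sum_(i < n) #|S :&: subs i|.
Proof.
rewrite -sum1_card (partition_big (fun p => ent x0 p P) xpredT) //=.
apply: eq_bigr => i _; rewrite -sum1_card; apply: eq_bigl => p.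
by rewrite in_setI inE.
Qed.

Lemma dist (p : kperm n k) j1 j2 : j1 < k -> j2 < k -> j1 <> j2 -> ent x0 p j1 != ent x0 p j2.
Proof. by move=> a b c; apply/eqP => /(ent_inj a b). Qed.

Lemma card3 (a b c : 'I_n) : #|[set a; b; c]| <= 3.
Proof.
apply: leq_trans (_ : #|[:: a; b; c]| <= 3); last exact: card_size.
apply: subset_leq_card; apply/subsetP => z; rewrite !inE -orbA; exact.
Qed.

Lemma card3C (a b c : 'I_n) : n - 3 <= #|~: [set a; b; c]|.
Proof. have := cardsC [set a; b; c]; rewrite card_ord; have := card3 a b c; lia. Qed.

Lemma not_sub i : ~~ (subs i \subset S).
Proof.
apply/negP => subS; have k0' := k0.
pose Q := if P == 1 then 2 else 1.
have Q0 : 0 < Q by rewrite /Q; case: eqP.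
have QP : Q <> P by rewrite /Q; case: eqP => ?; lia.
have Qk : Q < k by rewrite /Q; case: eqP => ?; lia.
have [u eu] : exists u : kperm n k, kseq u = iota 0 k.
  apply: (kperm_ex x0); [exact: size_iota | | exact: iota_uniq].
  by apply/allP => j; rewrite mem_iota => /andP [_ jk]; lia.
have entu j : j < k -> nat_of_ord (ent x0 u j) = j.
  by move=> jk; rewrite -(nth_kseq x0) // eu nth_iota.
have Pn : P < n by lia.
have P0' : 0 <> P by lia.
have Q0' : 0 <> Q by lia.
have PQ' : P <> Q by lia.
have Qn : Q < n by lia.
have uP : ent x0 u P = Ordinal Pn by apply: val_inj; rewrite /= entu.
have uQ : ent x0 u Q = Ordinal Qn by apply: val_inj; rewrite /= entu.
pose E1 := vp (tperm (Ordinal Pn) i) u.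
pose b := tperm (Ordinal Pn) i (Ordinal Qn).
pose e0 := ent x0 E1 0.
have E1P : ent x0 E1 P = i by rewrite ent_vp // uP tpermL.
have E1Q : ent x0 E1 Q = b by rewrite ent_vp // uQ.
have ne0i : e0 != i by rewrite -E1P dist //; lia.
have ne0b : e0 != b by rewrite -E1Q dist //; lia.
have nbi : b != i by rewrite -E1Q -E1P dist.
have [w] : exists w, w \in ~: [set i; b; e0].
  by apply/card_gt0P; have := card3C i b e0; lia.
rewrite !inE !negb_or  => /andP [/andP [wi wb] we].
pose E2 := vp (tperm i w) E1.
pose E3 := vp (tperm b w) E1.
have E2P : ent x0 E2 P = w by rewrite ent_vp // E1P tpermL.
have E20 : ent x0 E2 0 = e0 by rewrite ent_vp // tpermD // eq_sym.
have E3Q : ent x0 E3 Q = w by rewrite ent_vp // E1Q tpermL.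
have E3P : ent x0 E3 P = i by rewrite ent_vp // E1P tpermD.
have E30 : ent x0 E3 0 = e0 by rewrite ent_vp // tpermD // eq_sym.
pose X' := [set p : kperm n k | (ent x0 p P == i) && (ent x0 p Q == b)].
pose S1 := [set p : kperm n k | (ent x0 p 0 == i) && (ent x0 p Q == b)].
pose S2 := [set p : kperm n k | (ent x0 p 0 == b) && (ent x0 p P == i)].
pose S' := S1 :|: S2.
have notS' p : ent x0 p 0 != i -> ent x0 p 0 != b -> p \in setT :\: S'.
  by move=> pi pb; rewrite !inE (negbTE pi) (negbTE pb).
have hcutS' : hcut e setT S' h.
  apply/and3P; split; first exact: subsetT.
  - apply/existsP; exists E1; apply/existsP; exists E2.
    rewrite !notS' ?E20 //=.
    apply/negP => c.
    have : E2 \in X'.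
      apply: (connect_inv _ c); last by rewrite inE E1P E1Q !eqxx.
      move=> p v; rewrite inE => /andP [/eqP pP /eqP pQ] /and3P [_ vS' /(star_relP x0 _ _ k0)].
      case=> c' cn ev.
      have p0i : ent x0 p 0 != i by rewrite -pP dist.
      have p0b : ent x0 p 0 != b by rewrite -pQ dist.
      have v0 : ent x0 v 0 = c' by rewrite ev ent_vp // tpermL.
      move: vS'; rewrite !inE.
      case: (eqVneq c' i) => [ci|ci].
        have cb : c' != b by rewrite ci eq_sym.
        have vQ : ent x0 v Q = b by rewrite ev ent_vp // pQ tpermD.
        by rewrite v0 ci vQ !eqxx.
      case: (eqVneq c' b) => [cb|cb].
        have vP : ent x0 v P = i by rewrite ev ent_vp // pP tpermD.
        by rewrite v0 cb vP !eqxx orbT.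
      have vP : ent x0 v P = i by rewrite ev ent_vp // pP tpermD.
      have vQ : ent x0 v Q = b by rewrite ev ent_vp // pQ tpermD.
      by rewrite vP vQ !eqxx.
    by rewrite inE E2P (negbTE wi).
  apply/forallP => v; apply/implyP => _; rewrite /deg_in.
  pose f := fun c => vp (tperm (ent x0 v 0) c) v.
  have finj : injective f.
    by move=> c1 c2 /(congr1 (fun p => ent x0 p 0)); rewrite !ent_vp // !tpermL.
  apply: leq_trans (_ : #|f @: (~: [set ent x0 v 0; i; b])| <= _).
    rewrite card_imset //; apply: leq_trans (card3C _ _ _); lia.
  apply: subset_leq_card; apply/subsetP => y /imsetP [c]; rewrite !inE !negb_or.
  move=> /andP [/andP [cv ci] cb] ->.
  have f0 : ent x0 (f c) 0 = c by rewrite ent_vp // tpermL.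
  apply/andP; split.
    by rewrite f0 (negbTE ci) (negbTE cb).
  by apply/(star_relP x0 _ _ k0); exists c.
have le1 : #|subs i| <= #|S| := subset_leq_card subS.
have le2 : #|S| <= #|S'| := mS hcutS'.
have le3 : #|S'| <= #|S1| + #|S2| by rewrite cardsU leq_subr.
pose swp := fun q : kperm n k => vp (tperm (ent x0 q 0) (ent x0 q P)) q.
have swpK : involutive swp.
  move=> q; rewrite /swp ent_vp // ent_vp // tpermL tpermR vpM tpermC tperm2 vp1 //.
have le4 : #|S1| <= #|X'|.
  rewrite -(card_imset S1 (can_inj swpK)); apply: subset_leq_card.
  apply/subsetP => y /imsetP [q]; rewrite inE => /andP [/eqP q0 /eqP qQ] ->.
  have d1 : ent x0 q 0 != ent x0 q Q by rewrite dist.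
  have d2 : ent x0 q P != ent x0 q Q by rewrite dist.
  by rewrite inE /swp !ent_vp // tpermR tpermD // q0 qQ !eqxx.
have dis : X' :&: S2 = set0.
  apply/setP => p; rewrite !inE.
  apply/negP => /andP [/andP [_ /eqP pQ] /andP [/eqP p0 _]].
  by move: (dist p k0 Qk Q0'); rewrite pQ p0 eqxx.
have le5 : #|E3 |: (X' :|: S2)| <= #|subs i|.
  apply: subset_leq_card; apply/subsetP => z; rewrite !inE.
  by case/orP => [/eqP ->|/orP [/andP [-> _]|/andP [_ ->]]] //; rewrite E3P.
move: le5; rewrite cardsU1 cardsU dis cards0 subn0.
have -> : E3 \notin X' :|: S2.
  by rewrite !inE E3Q E30 (negbTE wb) (negbTE ne0b) andbF.
move=> le5; move: le1 le2 le3 le4 le5; lia.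
Qed.

End Main.
Unset Implicit Arguments.

Theorem lemma3p3 (n k h t : nat) (S X : {set kperm n k}) :
  3 <= k -> k <= n - 1 -> 1 <= h -> h <= n - k ->
  min_hcut (@star_rel n k) S h ->
  component_of (@star_rel n k) (~: S) X ->
  2 <= t <= k ->
  let Y := ~: (S :|: X) in
  let Xi := fun i => X :&: sub_star k t i in
  let Yi := fun i => Y :&: sub_star k t i in
  let Si := fun i => S :&: sub_star k t i in
  let J := [set i : 'I_n | Xi i != set0] in
  let J' := [set i in J | Yi i != set0] in
  let T := [set i : 'I_n | Yi i != set0] in
  [/\ (forall i, i \in J' -> hcut (@star_rel n k) (sub_star k t i) (Si i) (h - 1)),
      #|J'| * kappa_s (@star_rel (n - 1) (k - 1)) (h - 1)
        <= kappa_s (@star_rel n k) h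
    & J :|: T = [set: 'I_n]].
Proof.
move=> k3 kn h1 hn [hS mS] [x1 x1S Xdef] /andP [t2 tk] Y Xi Yi Si J J' T.
have P0 : 0 < t.-1 by lia.
have Pk : t.-1 < k by lia.
have n0 : 0 < n by lia.
have n1 : 0 < n - 1 by lia.
pose x0 := Ordinal n0.
pose y0 : 'I_(n-1) := Ordinal n1.
have [p0 _] : exists p : kperm n k, kseq p = iota 0 k.
  apply: (kperm_ex x0); [exact: size_iota | | exact: iota_uniq].
  by apply/allP => j; rewrite mem_iota => /andP [_ jk]; lia.
have subE i : sub_star k t i = subs k t.-1 x0 i.
  by apply/setP => p; rewrite !inE (nth_kseq x0).
have pa i : i \in J' -> hcut (@star_rel n k) (subs k t.-1 x0 i) (S :&: subs k t.-1 x0 i) (h - 1).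
  rewrite !inE /Xi /Yi !subE => /andP [hx hy].
  exact: (part_a k3 kn hn P0 Pk hS x1S Xdef hx hy).
split.
- by move=> i iJ; rewrite /Si subE; apply: pa.
- rewrite (kappa_min (conj hS mS)) (card_S t.-1 S x0) -sum_nat_const.
  apply: leq_trans (_ : \sum_(i in J') #|S :&: subs k t.-1 x0 i| <= _).
    apply: leq_sum => i iJ.
    have [B [hB cB]] := transfer y0 p0 P0 Pk k3 (pa i iJ).
    exact: leq_trans (kappa_le hB) cB.
  by rewrite [X in _ <= X](bigID (fun i => i \in J')) /= leq_addr.
apply/setP => i; rewrite !inE /Xi /Yi /Y !subE.
apply/negPn/negP; rewrite negb_or !negbK => /andP [/eqP hx /eqP hy].
apply: (negP (not_sub x0 k3 kn hn P0 Pk hS mS x1S i)); apply/subsetP => p pi.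
case: (boolP (p \in S)) => // pS.
case: (boolP (p \in X)) => pX.
  by move: (in_set0 p); rewrite -hx inE pX pi.
by move: (in_set0 p); rewrite -hy in_setI in_setC in_setU (negbTE pS) (negbTE pX) pi.
Qed.
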